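(* Let $G$ be a graph, let $v$ be a leaf (vertex of degree $1$) of $G$, and let $N(v)=\{w\}$. Then $$\phi(G)\le \sum_{u\in N(w)\setminus\{v\}}\phi\big(G-(N[w]\cup N[u])\big)+\phi(G-v-w)+\phi(G-N[w]).$$
   Context: Graphs are finite and simple. $N(v)$ is the neighborhood of $v$, $N[v]=N(v)\cup\{v\}$, and $G-S$ is the subgraph induced by $V(G)\setminus S$. A subset $F$ of vertices is a dissociation set if $G[F]$ has maximum degree at most $1$; a maximal dissociation set is one not properly contained in another dissociation set; $\phi(G)$ is the number of maximal dissociation sets of $G$, with $\phi=1$ for the graph with no vertices. *)

(* Defs.v *)
(* A finite simple graph is a symmetric irreflexive relation
   e on a finite vertex type T. Induced subgraphs G[W] are represented by a
   vertex subset W : {set T} (so G - S is G[~: S]). *)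
From mathcomp Require Import all_boot.
Set Implicit Arguments. Unset Strict Implicit. Unset Printing Implicit Defensive.

Section Dissoc.
Variable T : finType.
Variable e : rel T.

Definition nbr (v : T) : {set T} := [set u | e v u].
Definition cnbr (v : T) : {set T} := v |: nbr v.

Definition dissoc (F : {set T}) : bool :=
  [forall x in F, #|F :&: nbr x| <= 1].

Definition maxdissoc (W F : {set T}) : bool :=
  [&& F \subset W, dissoc F &
      [forall F' : {set T},
         [&& F' \subset W, dissoc F' & F \subset F'] ==> (F' == F)]].

(* phi(G[W]) = number of maximal dissociation sets of G[W];
   equals 1 when W is empty (only the empty set). *)
Definition phi (W : {set T}) : nat := #|[set F : {set T} | maxdissoc W F]|.
End Dissoc.

(* Main.v *)
Require Import Defs.
From mathcomp Require Import all_boot.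

Section H.
Variable T : finType.
Variable e : rel T.
Hypothesis e_sym : symmetric e.

Lemma dissocP (F : {set T}) :
  reflect (forall x y z, x \in F -> y \in F -> z \in F -> e x y -> e x z -> y = z)
          (dissoc e F).
Proof.
apply: (iffP forall_inP) => H.
- move=> x y z xF yF zF exy exz; have /card_le1_eqP := H x xF.
  by apply; rewrite !inE ?xF ?yF ?zF ?exy ?exz.
- move=> x xF; apply/card_le1_eqP => y z; rewrite !inE => /andP[yF exy] /andP[zF exz].
  exact: (H x).
Qed.

Lemma dissoc_sub (A B : {set T}) : A \subset B -> dissoc e B -> dissoc e A.
Proof.
move=> /subsetP sAB /dissocP H; apply/dissocP => x y z xA yA zA.
by apply: H; apply: sAB.
Qed.

Lemma dissocU (A B : {set T}) : dissoc e A -> dissoc e B ->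
  (forall a b, a \in A -> b \in B -> ~~ e a b) -> dissoc e (A :|: B).
Proof.
move=> /dissocP HA /dissocP HB N; apply/dissocP => x y z.
rewrite !inE => /orP[xA|xB] /orP[yA|yB] /orP[zA|zB] exy exz;
  try (by apply: (HA x)); try (by apply: (HB x));
  try (by move: (N _ _ xA yB); rewrite exy);
  try (by move: (N _ _ xA zB); rewrite exz);
  try (by move: (N _ _ yA xB); rewrite e_sym exy);
  try (by move: (N _ _ zA xB); rewrite e_sym exz).
Qed.

Lemma maxdissocP (W F : {set T}) :
  maxdissoc e W F <->
  [/\ F \subset W, dissoc e F & forall x, x \in W -> x \notin F -> ~~ dissoc e (x |: F)].
Proof.
split.
- case/and3P => sFW dF /forallP H; split => // x xW xF; apply/negP => dxF.
  have := H (x |: F); rewrite dxF subsetUr andbT.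
  have -> : x |: F \subset W by rewrite subUset sub1set xW.
  move=> /= /eqP E; move: xF; by rewrite -E setU11.
- case=> sFW dF H; apply/and3P; split => //; apply/forallP => F'.
  apply/implyP => /and3P[sF'W dF' sFF']; rewrite eqEsubset sFF' andbT.
  apply/subsetP => x xF'; apply/negPn/negP => xF.
  have := H x (subsetP sF'W x xF') xF; rewrite (@dissoc_sub (x |: F) F') //.
  by rewrite subUset sub1set xF' sFF'.
Qed.

Lemma gen (F B W : {set T}) : maxdissoc e setT F -> B \subset F ->
  F :\: B \subset W -> (forall a b, a \in W -> b \in B -> ~~ e a b) ->
  (forall x, x \in W -> x \notin B) -> maxdissoc e W (F :\: B).
Proof.
move=> /maxdissocP [_ dF mF] sBF sW N WB; apply/maxdissocP; split => //.
  by apply: dissoc_sub dF; apply: subsetDl.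
move=> x xW xFB; apply/negP => dx.
have xF : x \notin F by move: xFB; rewrite !inE (negbTE (WB x xW)).
have := mF x (in_setT x) xF; rewrite (_ : x |: F = (x |: (F :\: B)) :|: B).
  rewrite dissocU //; first by apply: dissoc_sub dF.
  move=> a b; rewrite in_setU1 => /orP[/eqP->|aFB]; first exact: N.
  by apply: N; apply: (subsetP sW).
apply/setP => y; rewrite !inE; case yB: (y \in B); rewrite ?orbT //.
  by rewrite (subsetP sBF y yB) orbT.
by rewrite orbF.
Qed.

Lemma card_bigcup_le (I : finType) (P : pred I) (A : I -> {set T}) :
  #|\bigcup_(i | P i) A i| <= \sum_(i | P i) #|A i|.
Proof.
elim/big_rec2: _ => [|i X n _ IH]; first by rewrite cards0.
by rewrite cardsU (leq_trans (leq_subr _ _)) // leq_add2l.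
Qed.

End H.

Lemma cardU_le (T : finType) (A B : {set T}) : #|A :|: B| <= #|A| + #|B|.
Proof. by rewrite cardsU leq_subr. Qed.

Theorem lemma2p3 (T : finType) (e : rel T) (e_sym : symmetric e)
  (e_irr : irreflexive e) (v w : T) (hv : nbr e v = [set w]) :
  phi e [set: T] <=
    \sum_(u in nbr e w :\ v) phi e (~: (cnbr e w :|: cnbr e u))
    + phi e (~: [set v; w]) + phi e (~: cnbr e w).
Proof.
have hvx x : e v x = (x == w).
  by have := f_equal (fun s : {set T} => x \in s) hv; rewrite /nbr !inE.
have evw : e v w by rewrite hvx.
have ewv : e w v by rewrite e_sym.
have vw : (v == w) = false.
  by apply/negbTE/eqP => E; move: evw; rewrite E e_irr.
pose S := [set F | maxdissoc e setT F].
pose g (B : {set T}) := fun F' : {set T} => F' :|: B.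
pose Sx W := [set F | maxdissoc e W F].
have key : forall F B W : {set T}, F \in S -> B \subset F -> F :\: B \subset W ->
    (forall a b, a \in W -> b \in B -> ~~ e a b) ->
    (forall x, x \in W -> x \notin B) -> F \in g B @: Sx W.
  move=> F B W FS sBF sW N WB.
  have -> : F = g B (F :\: B).
    apply/setP => y; rewrite /g !inE; case yB: (y \in B).
      by rewrite orbT (subsetP sBF y yB).
    by rewrite orbF.
  apply: imset_f; rewrite inE; apply: gen => //; by rewrite inE in FS.
have sub : S \subset (\bigcup_(u in nbr e w :\ v)
              (g [set w; u] @: Sx (~: (cnbr e w :|: cnbr e u))))
           :|: (g [set v] @: Sx (~: [set v; w]))
           :|: (g [set v; w] @: Sx (~: cnbr e w)).
  apply/subsetP => F FS; have mF := FS; rewrite inE in mF.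
  case/maxdissocP: mF => _ dF0 mx; have dF := dF0; move/dissocP: dF => dF.
  case wF: (w \in F).
    case vF: (v \in F).
      apply/setUP; right; apply: key => //.
      - by rewrite subUset !sub1set vF wF.
      - apply/subsetP => y; rewrite /cnbr /nbr !inE => /andP[/norP[yv yw] yF].
        rewrite (negbTE yw) /=; apply/negP => ewy.
        by move: yv; rewrite (dF w v y wF vF yF ewv ewy) eqxx.
      - move=> a b; rewrite /cnbr /nbr !inE => /norP[aw naw] /orP[/eqP->|/eqP->].
          by rewrite e_sym hvx (negbTE aw).
        by rewrite e_sym.
      - move=> x; rewrite /cnbr /nbr !inE => /norP[xw nxw]; apply/norP; split => //.
        by apply: contra nxw => /eqP->.
    case: (boolP [exists u, (u \in F) && e w u]) => [/existsP [u /andP[uF ewu]] | /existsPn nou].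
      apply/setUP; left; apply/setUP; left; apply/bigcupP; exists u.
        rewrite !inE ewu andbT; by apply: contraTneq uF => ->; rewrite vF.
      apply: key => //.
      - by rewrite subUset !sub1set wF uF.
      - apply/subsetP => y; rewrite /cnbr /nbr !inE => /andP[/norP[yw yu] yF].
        rewrite !negb_or yw yu /=; apply/andP; split; apply/negP => E.
          by move: yu; rewrite (dF w u y wF uF yF ewu E) eqxx.
        by move: yw; rewrite (dF u w y uF wF yF _ E) ?eqxx // e_sym.
      - move=> a b; rewrite /cnbr /nbr !inE => /norP[/norP[aw naw] /norP[au nau]] /orP[/eqP->|/eqP->];
          by rewrite e_sym.
      - move=> x; rewrite /cnbr /nbr !inE => /norP[/norP[xw _] /norP[xu _]]; by apply/norP.
    have := mx v (in_setT v) (negbT vF); move/negP; case.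
    apply/dissocP => a b c; rewrite !in_setU1 => /orP[/eqP->|aF] /orP[/eqP->|bF] /orP[/eqP->|cF] //.
    - by rewrite e_irr.
    - by rewrite e_irr.
    - by rewrite !hvx => /eqP-> /eqP->.
    - rewrite e_sym hvx => /eqP -> ewc; by have := nou c; rewrite cF ewc.
    - rewrite (e_sym a v) hvx => + /eqP E; rewrite E => ewb; by have := nou b; rewrite bF ewb.
    - exact: dF.
  have vF : v \in F.
    apply/negPn/negP => vF; have := mx v (in_setT v) vF; move/negP; apply.
    apply: dissocU => //.
      by apply/dissocP => a b c; rewrite !inE => /eqP-> /eqP-> /eqP->.
    move=> a b; rewrite inE => /eqP-> bF; rewrite hvx.
    by apply/eqP => bw; move: wF; rewrite -bw bF.
  apply/setUP; left; apply/setUP; right; apply: key => //.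
  - by rewrite sub1set.
  - apply/subsetP => y; rewrite !inE => /andP[yv yF]; rewrite negb_or yv /=.
    by apply/eqP => yw; move: wF; rewrite -yw yF.
  - by move=> a b; rewrite !inE => /norP[av aw] /eqP->; rewrite e_sym hvx.
  - by move=> x; rewrite !inE => /norP[].
apply: (leq_trans (subset_leq_card sub)).
apply: (leq_trans (cardU_le _ _ _)); apply: leq_add; last exact: leq_imset_card.
apply: (leq_trans (cardU_le _ _ _)); apply: leq_add; last exact: leq_imset_card.
apply: (leq_trans (card_bigcup_le _ _ _ _)); apply: leq_sum => u _.
exact: leq_imset_card.
Qed.
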